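(* Let $d$ be prime, $n\ge1$, $G$ invertible over $\mathbb Z_d$, and $\rho,\sigma$ $n$-qudit states, with $\vec\lambda_\tau$ the eigenvalue vector of $\tau$. (1) If $G$ is odd-parity positive, then $\vec\lambda_{\rho\boxtimes\sigma}\prec\vec\lambda_\sigma$, hence $f(\rho\boxtimes\sigma)\ge f(\sigma)$ for every Schur-concave $f$. (2) If $G$ is even-parity positive, then $\vec\lambda_{\rho\boxtimes\sigma}\prec\vec\lambda_\rho$, hence $f(\rho\boxtimes\sigma)\ge f(\rho)$ for every Schur-concave $f$. (3) If $G$ is positive, both hold, hence $f(\rho\boxtimes\sigma)\ge\max\{f(\rho),f(\sigma)\}$ for every Schur-concave $f$.
   Context: Fix a prime $d$. Let $G=\begin{pmatrix}g_{00}&g_{01}\\ g_{10}&g_{11}\end{pmatrix}$ over $\mathbb Z_d$ with $\det G\not\equiv0$, $N=(\det G)^{-1}$. $G$ is nontrivial if at most one entry is $0$ mod $d$; odd-parity positive if nontrivial and $g_{01},g_{10}\not\equiv0$; even-parity positive if nontrivial and $g_{00},g_{11}\not\equiv0$; positive if both. Key unitary on $(\mathbb C^d)^{\otimes n}\otimes(\mathbb C^d)^{\otimes n}$: $U|\vec i\rangle|\vec j\rangle=|Ng_{11}\vec i-Ng_{10}\vec j\rangle|-Ng_{01}\vec i+Ng_{00}\vec j\rangle$; convolution $\rho\boxtimes\sigma=\mathrm{Tr}_B[U(\rho\otimes\sigma)U^\dagger]$. Majorization $\vec p\prec\vec q$ of probability vectors: $\sum_{i\le k}p^\downarrow_i\le\sum_{i\le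 k}q^\downarrow_i$ for all $k$ (decreasing rearrangements). $f$ is Schur concave if $\vec p\prec\vec q\Rightarrow f(\vec p)\ge f(\vec q)$; $f(\rho):=f(\vec\lambda_\rho)$. *)

(* Defs.v *)
From HB Require Import structures.
From mathcomp Require Import all_boot all_order all_algebra.
Set Implicit Arguments. Unset Strict Implicit. Unset Printing Implicit Defensive.
Import Order.TTheory GRing.Theory Num.Theory.
Local Open Scope ring_scope.

Definition g00 (d : nat) (G : 'M['F_d]_2) : 'F_d := G ord0 ord0.
Definition g01 (d : nat) (G : 'M['F_d]_2) : 'F_d := G ord0 ord_max.
Definition g10 (d : nat) (G : 'M['F_d]_2) : 'F_d := G ord_max ord0.
Definition g11 (d : nat) (G : 'M['F_d]_2) : 'F_d := G ord_max ord_max.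

Definition nontrivialG (d : nat) (G : 'M['F_d]_2) : bool :=
  (#|[set ij : 'I_2 * 'I_2 | G ij.1 ij.2 == 0%R] | <= 1)%N.
Definition odd_parity_positive (d : nat) (G : 'M['F_d]_2) : bool :=
  [&& nontrivialG G, g01 G != 0 & g10 G != 0].
Definition even_parity_positive (d : nat) (G : 'M['F_d]_2) : bool :=
  [&& nontrivialG G, g00 G != 0 & g11 G != 0].
Definition positiveG (d : nat) (G : 'M['F_d]_2) : bool :=
  odd_parity_positive G && even_parity_positive G.

(* computational basis labels of (C^d)^{\otimes n} : vectors in Z_d^n *)
Definition qidx (d n : nat) : finType := {ffun 'I_n -> 'F_d}.

(* operators on the space with orthonormal basis indexed by a finType T *)
Definition op (C : Type) (T : finType) := T -> T -> C.

Definition mx_of_op (C : numClosedFieldType) (T : finType) (A : op C T)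
  : 'M[C]_#|T| := \matrix_(i, j) A (enum_val i) (enum_val j).

Definition is_state (C : numClosedFieldType) (T : finType) (A : op C T) : Prop :=
  [/\ (forall i j, A j i = (A i j)^*),
      (forall v : T -> C, 0 <= \sum_i \sum_j (v i)^* * A i j * v j)
    & \sum_i A i i = 1].

Definition eigvec (C : numClosedFieldType) (T : finType) (A : op C T)
  (l : 'I_#|T| -> C) : Prop :=
  char_poly (mx_of_op A) = \prod_i ('X - (l i)%:P).

Definition tens (C : numClosedFieldType) (T : finType) (A B : op C T)
  : op C (T * T)%type := fun p q => A p.1 q.1 * B p.2 q.2.

Definition keymap (d n : nat) (G : 'M['F_d]_2) (ij : qidx d n * qidx d n)
  : qidx d n * qidx d n :=
  let N := (\det G)^-1 in
  ([ffun k => N * g11 G * ij.1 k - N * g10 G * ij.2 k],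
   [ffun k => - (N * g01 G * ij.1 k) + N * g00 G * ij.2 k]).

Definition keyU (C : numClosedFieldType) (d n : nat) (G : 'M['F_d]_2)
  : op C (qidx d n * qidx d n)%type :=
  fun p q => if p == keymap G q then 1 else 0.

Definition conjU (C : numClosedFieldType) (T : finType) (U M : op C T) : op C T :=
  fun p q => \sum_r \sum_s U p r * M r s * (U q s)^*.

Definition ptrB (C : numClosedFieldType) (T : finType) (M : op C (T * T)%type)
  : op C T := fun a a' => \sum_b M (a, b) (a', b).

Definition conv (C : numClosedFieldType) (d n : nat) (G : 'M['F_d]_2)
  (rho sigma : op C (qidx d n)) : op C (qidx d n) :=
  ptrB (conjU (keyU C G) (tens rho sigma)).

Definition prob_vec (C : numClosedFieldType) (m : nat) (p : 'I_m -> C) : Prop :=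
  (forall i, 0 <= p i) /\ \sum_i p i = 1.

Definition decr (C : numClosedFieldType) (m : nat) (p : 'I_m -> C) : seq C :=
  sort (fun x y => y <= x) [seq p i | i <- enum 'I_m].

Definition majorized (C : numClosedFieldType) (m : nat) (p q : 'I_m -> C) : Prop :=
  forall k : nat, \sum_(i < k) nth 0 (decr p) i <= \sum_(i < k) nth 0 (decr q) i.

Definition schur_concave (C : numClosedFieldType) (m : nat)
  (f : ('I_m -> C) -> C) : Prop :=
  forall p q, prob_vec p -> prob_vec q -> majorized p q -> f q <= f p.

(* Main.v *)
Require Import Defs.
From HB Require Import structures.
From mathcomp Require Import all_boot all_order all_algebra.
From mathcomp Require Import ring.
Set Implicit Arguments. Unset Strict Implicit. Unset Printing Implicit Defensive.
Import Order.TTheory GRing.Theory Num.Theory.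
Local Open Scope ring_scope.


Lemma char_poly_sim (R : comUnitRingType) m (P X : 'M[R]_m) : P \in unitmx ->
  char_poly (invmx P *m X *m P) = char_poly X.
Proof.
move=> Pu; rewrite /char_poly /char_poly_mx.
have -> : 'X%:M - map_mx polyC (invmx P *m X *m P) =
  map_mx polyC (invmx P) *m ('X%:M - map_mx polyC X) *m map_mx polyC P.
  rewrite mulmxBr mulmxBl !map_mxM; congr (_ - _).
  by rewrite -mulmxA mul_scalar_mx -scalemxAr -map_mxM mulVmx // map_mx1 scalemx1.
rewrite !det_mulmx !det_map_mx mulrC mulrA -rmorphM -det_mulmx mulmxV //.
by rewrite det1 rmorph1 mul1r.
Qed.

Section SpecSec.
Local Open Scope sesquilinear_scope.


Lemma spec_op (C : numClosedFieldType) (T : finType) (A : op C T) :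
 (forall i j, A j i = (A i j)^*) ->
 exists (b : 'I_#|T| -> C) (e : 'I_#|T| -> T -> C),
 [/\ char_poly (mx_of_op A) = \prod_k ('X - (b k)%:P),
     forall x y, A x y = \sum_k b k * e k x * (e k y)^*,
     forall k k', \sum_x (e k x)^* * e k' x = (k == k')%:R &
     forall x y, \sum_k e k x * (e k y)^* = (x == y)%:R].
Proof.
move=> Ah; set M := mx_of_op A.
have herm : M \is hermsymmx.
  apply/is_hermitianmxP; rewrite expr0 scale1r; apply/matrixP => i j.
  by rewrite !mxE Ah.
have /orthomx_spectralP eqM := hermitian_normalmx herm.
set P := spectralmx M in eqM; set D := spectral_diag M in eqM.
have Pu : P \is unitarymx by apply: spectral_unitarymx.
have Pun : P \in unitmx by apply: spectral_unit.
have PPt : P *m P^t* = 1%:M by apply/unitarymxP.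
have PtP : P^t* *m P = 1%:M by rewrite -invmx_unitary // mulVmx.
exists (fun k => D 0 k), (fun k x => (P k (enum_rank x))^*).
split.
- by rewrite -/M eqM char_poly_sim // char_poly_trig ?diag_mx_is_trig //;
    apply: eq_bigr => i _; rewrite mxE eqxx mulr1n.
- move=> x y; rewrite -{1}(enum_rankK x) -{1}(enum_rankK y).
  have -> : A (enum_val (enum_rank x)) (enum_val (enum_rank y)) =
     M (enum_rank x) (enum_rank y) by rewrite mxE.
  rewrite eqM invmx_unitary // mxE; apply: eq_bigr => k _.
  by rewrite mul_mx_diag !mxE conjCK [_ * D 0 k]mulrC.
- move=> k k'; have /matrixP/(_ k k') := PPt; rewrite !mxE => <-.
  rewrite [LHS](reindex (fun i : 'I_#|T| => enum_val i)) /=; last first.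
    by exists enum_rank => z _; rewrite ?enum_valK ?enum_rankK.
  by apply: eq_bigr => i _; rewrite enum_valK conjCK !mxE.
- move=> x y; have /matrixP/(_ (enum_rank x) (enum_rank y)) := PtP.
  rewrite !mxE (inj_eq enum_rank_inj) => <-.
  by apply: eq_bigr => k _; rewrite !mxE conjCK.
Qed.

End SpecSec.


Lemma sum_ind_lt (R : nmodType) m k (F : nat -> R) : (k <= m)%N ->
  \sum_(q < k) F q = \sum_(q < m) (if (q < k)%N then F q else 0).
Proof. by move=> km; rewrite (big_ord_widen _ _ km) big_mkcond. Qed.

Lemma sorted_sum_le (R : numDomainType) (t c : nat -> R) m k :
  (k <= m)%N -> (forall i j, (i <= j < m)%N -> t j <= t i) ->
  (forall q, (q < m)%N -> 0 <= c q <= 1) -> \sum_(q < m) c q = k%:R ->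
  \sum_(q < m) c q * t q <= \sum_(q < k) t q.
Proof.
move=> km tdec cb csum.
set tau := t (minn k m.-1).
rewrite -subr_ge0 (sum_ind_lt _ km) -sumrB.
have -> : \sum_(q < m) ((if (q < k)%N then t q else 0) - c q * t q) =
          \sum_(q < m) ((((q < k)%N)%:R - c q) * t q).
  apply: eq_bigr => q _; case: ifP => _; rewrite mulrBl ?mul1r ?mul0r // sub0r.
have H0 : \sum_(q < m) ((((q < k)%N)%:R - c q) * tau) = 0.
  have hk : \sum_(q < m) (((q < k)%N)%:R : R) = k%:R.
    have : \sum_(q < k) (1:R) = k%:R by rewrite sumr_const card_ord.
    rewrite (sum_ind_lt (fun _ => (1:R)) km) => <-.
    by apply: eq_bigr => q _; case: ifP.
  by rewrite -mulr_suml sumrB csum hk subrr mul0r.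
rewrite -[X in X <= _]H0.
apply: ler_sum => q _; rewrite -subr_ge0 -mulrBr.
have qm := ltn_ord q; have /andP[c0 c1] := cb q qm.
have m0 : (0 < m)%N by apply: leq_ltn_trans qm.
have mlt : (minn k m.-1 < m)%N.
  by apply: leq_ltn_trans (geq_minr _ _) _; rewrite ltn_predL.
case: ltnP => qk /=.
- apply: mulr_ge0; first by rewrite subr_ge0.
  rewrite subr_ge0; apply: (tdec); rewrite mlt andbT.
  by rewrite leq_min (ltnW qk) -ltnS prednK.
- apply: mulr_le0; first by rewrite sub0r oppr_le0.
  by rewrite subr_le0; apply: (tdec); rewrite qm andbT geq_min qk.
Qed.

Lemma sum_perm_iota (R : nmodType) m (Is : seq nat) (F : nat -> R) :
  perm_eq Is (iota 0 m) -> \sum_(i < m) F (nth 0%N Is i) = \sum_(i < m) F i.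
Proof.
move=> pI; have sI : size Is = m by rewrite (perm_size pI) size_iota.
rewrite -(big_mkord xpredT (fun i => F (nth 0%N Is i))) -{1}sI.
rewrite -(big_nth 0%N xpredT F) (perm_big _ pI) -(big_mkord xpredT F).
by rewrite /index_iota subn0.
Qed.

Lemma nth_perm_iota m (Is : seq nat) i :
  perm_eq Is (iota 0 m) -> (i < m)%N -> (nth 0%N Is i < m)%N.
Proof.
move=> pI im; have sI : size Is = m by rewrite (perm_size pI) size_iota.
have : nth 0%N Is i \in iota 0 m by rewrite -(perm_mem pI) mem_nth // sI.
by rewrite mem_iota.
Qed.

Lemma ds_core (R : numDomainType) m (L M : nat -> R) (S : nat -> nat -> R)
    (Is Js : seq nat) k :
  (k <= m)%N ->
  (forall i j, (i < m)%N -> (j < m)%N -> 0 <= S i j) ->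
  (forall j, (j < m)%N -> \sum_(i < m) S i j = 1) ->
  (forall i, (i < m)%N -> \sum_(j < m) S i j = 1) ->
  (forall i, (i < m)%N -> L i = \sum_(j < m) S i j * M j) ->
  perm_eq Is (iota 0 m) -> perm_eq Js (iota 0 m) ->
  (forall i j, (i <= j < m)%N -> M (nth 0%N Js j) <= M (nth 0%N Js i)) ->
  \sum_(i < k) L (nth 0%N Is i) <= \sum_(i < k) M (nth 0%N Js i).
Proof.
move=> km S0 Sc Sr LSM pI pJ Msort.
set c := fun j => \sum_(i < k) S (nth 0%N Is i) j.
have aI : forall i : 'I_k, (nth 0%N Is i < m)%N.
  by move=> i; apply: nth_perm_iota pI _; apply: leq_trans (ltn_ord i) km.
have -> : \sum_(i < k) L (nth 0%N Is i) = \sum_(j < m) c j * M j.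
  rewrite /c /=; under [RHS]eq_bigr => j _ do rewrite mulr_suml.
  rewrite exchange_big /=; apply: eq_bigr => i _; exact: LSM.
rewrite -(sum_perm_iota (fun j => c j * M j) pJ).
apply: (sorted_sum_le (t := fun q => M (nth 0%N Js q))
                      (c := fun q => c (nth 0%N Js q))) => //.
- move=> q qm; have bq := nth_perm_iota pJ qm; apply/andP; split.
    by apply: sumr_ge0 => i _; apply: S0.
  rewrite -(Sc _ bq) -(sum_perm_iota (fun i => S i (nth 0%N Js q)) pI).
  rewrite /c /= (sum_ind_lt (fun i => S (nth 0%N Is i) _) km); apply: ler_sum => i _.
  case: ifP => // _; apply: S0 => //; exact: nth_perm_iota pI _.
- rewrite (sum_perm_iota c pJ) /c exchange_big /=.
  transitivity (\sum_(i < k) (1:R)); last by rewrite sumr_const card_ord.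
  apply: eq_bigr => i _.
  exact: Sr.
Qed.


Lemma sum_nth_min (R : nmodType) (s : seq R) k :
  \sum_(i < k) nth 0 s i = \sum_(i < minn k (size s)) nth 0 s i.
Proof.
case: (leqP k (size s)) => ks.
  by [].
rewrite (sum_ind_lt (fun i => nth 0 s i) (ltnW ks)).
by apply: eq_bigr => i _; case: ifP => // /negbT; rewrite -leqNgt => h; rewrite nth_default.
Qed.

Lemma decr_perm (C : numClosedFieldType) m (p : 'I_m.+1 -> C) :
  exists2 Is, perm_eq Is (iota 0 m.+1) &
    decr p = map (fun j => p (inord j)) Is.
Proof.
have : perm_eq (decr p) [seq p i | i <- enum 'I_m.+1] by rewrite perm_sort.
case/(perm_iotaP 0) => Is pI ->; rewrite size_map size_enum_ord in pI.
exists Is => //; apply/eq_in_map => j; rewrite (perm_mem pI) mem_iota add0n => jm.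
rewrite (nth_map ord0) ?size_enum_ord //; congr p; apply: val_inj.
by rewrite /= nth_enum_ord // inordK.
Qed.

Lemma ds_major (C : numClosedFieldType) m (l mu : 'I_m -> C) (S : 'I_m -> 'I_m -> C) :
  (forall j, mu j \is Num.real) ->
  (forall i j, 0 <= S i j) -> (forall j, \sum_i S i j = 1) -> (forall i, \sum_j S i j = 1) ->
  (forall i, l i = \sum_j S i j * mu j) -> majorized l mu.
Proof.
case: m l mu S => [|m] l mu S mur S0 Sc Sr lS k.
  by rewrite /decr enum_ord0 /= !big1 // => i _; rewrite nth_nil.
have [Is pI dl] := decr_perm l; have [Js pJ dm] := decr_perm mu.
rewrite sum_nth_min [X in _ <= X]sum_nth_min dl dm !size_map.
rewrite (perm_size pI) (perm_size pJ) size_iota.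
have km : (minn k m.+1 <= m.+1)%N by apply: geq_minr.
have sI : size Is = m.+1 by rewrite (perm_size pI) size_iota.
have sJ : size Js = m.+1 by rewrite (perm_size pJ) size_iota.
have -> : \sum_(i < minn k m.+1) nth 0 [seq l (inord j) | j <- Is] i =
          \sum_(i < minn k m.+1) l (inord (nth 0%N Is i)).
  apply: eq_bigr => i _; rewrite (nth_map 0%N) // sI.
  exact: leq_trans (ltn_ord i) km.
have -> : \sum_(i < minn k m.+1) nth 0 [seq mu (inord j) | j <- Js] i =
          \sum_(i < minn k m.+1) mu (inord (nth 0%N Js i)).
  apply: eq_bigr => i _; rewrite (nth_map 0%N) // sJ.
  exact: leq_trans (ltn_ord i) km.
apply: (ds_core (m := m.+1) (k := minn k m.+1) (S := fun i j => S (inord i) (inord j))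
          (L := fun j => l (inord j)) (M := fun j => mu (inord j))) => //.
- move=> j jm; rewrite -[RHS](Sc (inord j)).
  by apply: eq_bigr => i _; rewrite inord_val.
- move=> i im; rewrite -[RHS](Sr (inord i)).
  by apply: eq_bigr => j _; rewrite inord_val.
- by move=> i im /=; rewrite lS; apply: eq_bigr => j _; rewrite inord_val.
- move=> i j /andP[ij jm].
  have srt : sorted (fun x y => y <= x) (decr mu).
    apply: (sort_sorted_in (P := Num.real)).
      by move=> x y xr yr; apply: real_leVge.
    by rewrite all_map; apply/allP => z _ /=; exact: mur.
  have := sorted_leq_nth (fun y x z (h1 : y <= x) (h2 : z <= y) => le_trans h2 h1)
            (fun x => lexx x) 0 srt.
  rewrite dm size_map sJ => /(_ i j); rewrite !inE.
  rewrite !(nth_map 0%N) ?sJ //; last exact: leq_ltn_trans jm.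
  by apply => //; apply: leq_ltn_trans jm.
Qed.


Section Quad.
Variables (C : numClosedFieldType) (T : finType).

Definition quad (u : T -> C) (A : op C T) := \sum_i \sum_j (u i)^* * A i j * u j.
Definition rk1 (v : T -> C) : op C T := fun p q => v p * (v q)^*.

Lemma quad_lin (I : finType) u (X : op C T) (c : I -> C) (Y : I -> op C T) :
  (forall p q, X p q = \sum_j c j * Y j p q) ->
  quad u X = \sum_j c j * quad u (Y j).
Proof.
move=> hX; rewrite /quad.
under eq_bigr => i _ do under eq_bigr => k _ do
  rewrite hX mulr_sumr mulr_suml.
under eq_bigr => i _ do rewrite exchange_big /=.
rewrite exchange_big /=; apply: eq_bigr => j _.
rewrite mulr_sumr; apply: eq_bigr => i _; rewrite mulr_sumr; apply: eq_bigr => k _.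
by rewrite mulrCA !mulrA.
Qed.

Lemma quad_decomp (m : nat) (c : 'I_m -> C) (g : 'I_m -> T -> C) (X : op C T) i :
  (forall x y, X x y = \sum_k c k * g k x * (g k y)^*) ->
  (forall k k', \sum_x (g k x)^* * g k' x = (k == k')%:R) ->
  quad (g i) X = c i.
Proof.
move=> hX orth.
rewrite (@quad_lin _ _ _ c (fun k => rk1 (g k))); last first.
  by move=> p q; rewrite hX; apply: eq_bigr => k _; rewrite /rk1 mulrA.
rewrite (bigD1 i) //= big1 ?addr0.
  rewrite /quad /rk1.
  have -> : \sum_i0 \sum_j (g i i0)^* * (g i i0 * (g i j)^*) * g i j =
            (\sum_x (g i x)^* * g i x) * (\sum_x (g i x)^* * g i x).
    rewrite mulr_suml; apply: eq_bigr => x _; rewrite mulr_sumr.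
    by apply: eq_bigr => y _; rewrite !mulrA.
  by rewrite orth eqxx /= !mulr1.
move=> k kne; rewrite /quad /rk1.
have -> : \sum_i0 \sum_j (g i i0)^* * (g k i0 * (g k j)^*) * g i j =
          (\sum_x (g i x)^* * g k x) * (\sum_x (g k x)^* * g i x).
  rewrite mulr_suml; apply: eq_bigr => x _; rewrite mulr_sumr.
  by apply: eq_bigr => y _; rewrite !mulrA.
by rewrite orth eq_sym (negbTE kne) mul0r mulr0.
Qed.

Lemma quad_compl (m : nat) (f : 'I_m -> T -> C) (X : op C T) :
  (forall x y, \sum_k f k x * (f k y)^* = (x == y)%:R) ->
  \sum_i quad (f i) X = \sum_x X x x.
Proof.
move=> compl; rewrite /quad exchange_big /=; apply: eq_bigr => x _.
rewrite exchange_big /= (bigD1 x) //= [Z in _ + Z]big1 ?addr0.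
  have h1 : \sum_k f k x * (f k x)^* = 1 by rewrite compl eqxx.
  rewrite -[RHS]mulr1 -h1 mulr_sumr; apply: eq_bigr => k _.
  by rewrite [_ * X x x]mulrC -mulrA [(f k x)^* * _]mulrC.
move=> y yne.
have h0 : \sum_k f k y * (f k x)^* = 0 by rewrite compl (negbTE yne).
rewrite -[RHS](mulr0 (X x y)) -[in RHS]h0 mulr_sumr.
by apply: eq_bigr => k _; rewrite [_ * X x y]mulrC -mulrA [(f k x)^* * _]mulrC.
Qed.

End Quad.


Lemma eig_perm (C : numClosedFieldType) (T : finType) (A : op C T) l b :
  eigvec A l -> char_poly (mx_of_op A) = \prod_k ('X - (b k)%:P) ->
  perm_eq (map l (enum 'I_#|T|)) (map b (enum 'I_#|T|)).
Proof.
rewrite /eigvec => -> eq; apply: prod_XsubC_eq.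
have E : forall F : 'I_#|T| -> {poly C},
    \prod_(x <- enum 'I_#|T|) F x = \prod_i F i by move=> F; rewrite big_enum.
rewrite (big_map l xpredT (fun x => 'X - x%:P)) (big_map b xpredT (fun x => 'X - x%:P)).
rewrite (E (fun j => 'X - (l j)%:P)) (E (fun j => 'X - (b j)%:P)).
by rewrite eq.
Qed.



Lemma decr_eq (C : numClosedFieldType) m (l b : 'I_m -> C) :
  perm_eq (map l (enum 'I_m)) (map b (enum 'I_m)) ->
  (forall j, b j \is Num.real) -> decr l = decr b.
Proof.
move=> pe br; apply/perm_sort_inP.
- move=> x y; rewrite !(perm_mem pe) => /mapP[i _ ->] /mapP[j _ ->].
  rewrite orbC; apply: real_leVge; apply: br.
- move=> x y z _ _ _ h1 h2; exact: le_trans h2 h1.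
- move=> x y _ _ /andP[h1 h2]; apply/eqP; rewrite eq_le h1 h2 //.
- exact: pe.
Qed.

Lemma prob_perm (C : numClosedFieldType) m (l b : 'I_m -> C) :
  perm_eq (map l (enum 'I_m)) (map b (enum 'I_m)) -> prob_vec b -> prob_vec l.
Proof.
move=> pe [b0 b1]; split.
  move=> i; have : l i \in map b (enum 'I_m) by rewrite -(perm_mem pe) map_f // mem_enum.
  by case/mapP => j _ ->.
have E : forall f : 'I_m -> C,
    \sum_(x <- [seq f i | i <- enum 'I_m]) x = \sum_i f i.
  by move=> f; rewrite big_map big_enum.
by rewrite -b1 -(E l) -(E b); apply: perm_big.
Qed.


Lemma channel (C : numClosedFieldType) (T : finType) (Phi : op C T -> op C T) (A : op C T) :
  (forall (X : op C T) (c : 'I_#|T| -> C) (Y : 'I_#|T| -> op C T),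
     (forall p q, X p q = \sum_j c j * Y j p q) ->
     forall x y, Phi X x y = \sum_j c j * Phi (Y j) x y) ->
  (forall u v, 0 <= quad u (Phi (rk1 v))) ->
  (forall X, (forall p q, X p q = (p == q)%:R) -> forall x y, Phi X x y = (x == y)%:R) ->
  (forall v, \sum_x Phi (rk1 v) x x = \sum_x v x * (v x)^*) ->
  is_state A -> (forall i j, Phi A j i = (Phi A i j)^*) ->
  forall l la, eigvec (Phi A) l -> eigvec A la ->
  majorized l la /\ prob_vec l /\ prob_vec la.
Proof.
move=> lin pos uni tp [Ah Apsd Atr] PAh l la el ela.
have [b [e [cpA hA orthA complA]]] := spec_op Ah.
have [lam [f [cpB hB orthB complB]]] := spec_op PAh.
have b0 : forall j, 0 <= b j.
  by move=> j; rewrite -(quad_decomp j hA orthA); apply: Apsd.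
have bsum : \sum_j b j = 1.
  rewrite -Atr; under [RHS]eq_bigr => x _ do rewrite hA.
  rewrite exchange_big /=; apply: eq_bigr => k _.
  have h := orthA k k; rewrite eqxx in h.
  transitivity (b k * \sum_x (e k x)^* * e k x); first by rewrite h mulr1.
  rewrite mulr_sumr; apply: eq_bigr => x _.
  by rewrite -mulrA [e k x * _]mulrC.
set S := fun i j => quad (f i) (Phi (rk1 (e j))).
have S0 : forall i j, 0 <= S i j by move=> i j; apply: pos.
pose D : op C T := fun p q => (p == q)%:R.
have Sr : forall i, \sum_j S i j = 1.
  move=> i.
  have h1 : quad (f i) (Phi D) = 1.
    rewrite (@quad_decomp _ _ _ (fun _ => 1) f _ i _ orthB) //.
    move=> x y; rewrite (uni D) // -complB.
    by apply: eq_bigr => k _; rewrite mul1r.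
  rewrite -h1 (@quad_lin _ _ _ (f i) (Phi D) (fun _ => 1) (fun j => Phi (rk1 (e j)))).
    by apply: eq_bigr => j _; rewrite mul1r.
  apply: lin => p q; rewrite /D -complA.
  by apply: eq_bigr => k _; rewrite mul1r.
have Sc : forall j, \sum_i S i j = 1.
  move=> j; have h := orthA j j; rewrite eqxx in h.
  rewrite /S quad_compl // tp.
  transitivity (\sum_x (e j x)^* * e j x); last by rewrite h.
  by apply: eq_bigr => x _; rewrite mulrC.
have lamS : forall i, lam i = \sum_j S i j * b j.
  move=> i; rewrite -(quad_decomp i hB orthB).
  rewrite (@quad_lin _ _ _ (f i) (Phi A) b (fun j => Phi (rk1 (e j)))).
    by apply: eq_bigr => j _; rewrite mulrC.
  apply: lin => p q; rewrite hA.
  by apply: eq_bigr => k _; rewrite /rk1 mulrA.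
have breal : forall j, b j \is Num.real by move=> j; apply: ger0_real.
have maj : majorized lam b := ds_major breal S0 Sc Sr lamS.
have lam0 : forall i, 0 <= lam i.
  by move=> i; rewrite lamS; apply: sumr_ge0 => j _; apply: mulr_ge0.
have lamreal : forall j, lam j \is Num.real by move=> j; apply: ger0_real.
have lamsum : \sum_i lam i = 1.
  under eq_bigr => i _ do rewrite lamS.
  rewrite exchange_big /= -bsum; apply: eq_bigr => j _.
  by rewrite -mulr_suml Sc mul1r.
have pl := eig_perm el cpB; have pla := eig_perm ela cpA.
split.
  by rewrite /majorized (decr_eq pl lamreal) (decr_eq pla breal); exact: maj.
by split; [apply: prob_perm pl _ | apply: prob_perm pla _]; split.
Qed.


Lemma det22 (d : nat) (G : 'M['F_d]_2) : \det G = g00 G * g11 G - g01 G * g10 G.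
Proof.
rewrite (expand_det_row _ 0) !big_ord_recl big_ord0 addr0 /cofactor !det_mx11 !mxE /=.
rewrite /g00 /g01 /g10 /g11 /=.
have e0 : (0 : 'I_2) = ord0 by apply: val_inj.
have e1 : (lift 0 0 : 'I_2) = ord_max by apply: val_inj.
have e2 : (lift ord0 ord0 : 'I_2) = ord_max by apply: val_inj.
have e3 : (lift (lift ord0 ord0) 0 : 'I_2) = ord0 by apply: val_inj.
have e4 : (lift ord0 0 : 'I_2) = ord_max by apply: val_inj.
rewrite ?e1 ?e2 ?e3 ?e4 ?e0 /=.
have e5 : (lift ord_max 0 : 'I_2) = ord0 by apply: val_inj.
rewrite e5 add0n /= expr0 expr1 mul1r mulN1r.
ring.
Qed.

Definition kinv (d n : nat) (G : 'M['F_d]_2) (p : qidx d n * qidx d n)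
  : qidx d n * qidx d n :=
  ([ffun k => g00 G * p.1 k + g10 G * p.2 k],
   [ffun k => g01 G * p.1 k + g11 G * p.2 k]).

Section Key.
Variables (d n : nat) (G : 'M['F_d]_2).
Hypothesis dG : \det G != 0.

Lemma keymapK : cancel (@kinv d n G) (keymap G).
Proof.
have NV : (\det G)^-1 * (g00 G * g11 G - g01 G * g10 G) = 1 by rewrite -det22 mulVf.
move=> [x b]; rewrite /keymap /kinv; congr pair; apply/ffunP => k; rewrite !ffunE /=.
  transitivity ((\det G)^-1 * (g00 G * g11 G - g01 G * g10 G) * x k); first ring.
  by rewrite NV mul1r.
transitivity ((\det G)^-1 * (g00 G * g11 G - g01 G * g10 G) * b k); first ring.
by rewrite NV mul1r.
Qed.

Lemma kinvK : cancel (keymap G) (@kinv d n G).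
Proof.
have NV : (\det G)^-1 * (g00 G * g11 G - g01 G * g10 G) = 1 by rewrite -det22 mulVf.
move=> [x b]; rewrite /keymap /kinv; congr pair; apply/ffunP => k; rewrite !ffunE /=.
  transitivity ((\det G)^-1 * (g00 G * g11 G - g01 G * g10 G) * x k); first ring.
  by rewrite NV mul1r.
transitivity ((\det G)^-1 * (g00 G * g11 G - g01 G * g10 G) * b k); first ring.
by rewrite NV mul1r.
Qed.

Lemma conv_E (C : numClosedFieldType) (rho sigma : op C (qidx d n)) x y :
  conv G rho sigma x y =
  \sum_b rho (kinv G (x, b)).1 (kinv G (y, b)).1 *
         sigma (kinv G (x, b)).2 (kinv G (y, b)).2.
Proof.
rewrite /conv /ptrB; apply: eq_bigr => b _.
rewrite /conjU (bigD1 (kinv G (x, b))) //= [Z in _ + Z]big1 ?addr0; last first.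
  move=> r rne; apply: big1 => s _; rewrite /keyU.
  case: eqP => [e|_]; last by rewrite !mul0r.
  by rewrite e kinvK eqxx in rne.
rewrite (bigD1 (kinv G (y, b))) //= [Z in _ + Z]big1 ?addr0; last first.
  move=> s sne; rewrite /keyU; case: ((y, b) =P keymap G s) => [e|_]; last by rewrite conjC0 mulr0.
  by rewrite e kinvK eqxx in sne.
by rewrite /keyU !keymapK !eqxx conjC1 mul1r mulr1 /tens.
Qed.

End Key.


Lemma sum_fiber (R : nmodType) (T U : finType) (g : T -> U) (K : T -> R) :
  \sum_x K x = \sum_p \sum_(x | g x == p) K x.
Proof. by rewrite (partition_big g xpredT). Qed.

Lemma psd_pull (C : numClosedFieldType) (T : finType) (R : op C T) (g : T -> T)
  (w : T -> C) : (forall v, 0 <= quad v R) ->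
  0 <= \sum_x \sum_y (w x)^* * R (g x) (g y) * w y.
Proof.
move=> Rpsd.
have -> : \sum_x \sum_y (w x)^* * R (g x) (g y) * w y =
          quad (fun p => \sum_(x | g x == p) w x) R; last exact: Rpsd.
rewrite /quad (sum_fiber g); apply: eq_bigr => p _.
rewrite rmorph_sum.
under [RHS]eq_bigr => q _ do rewrite !mulr_suml.
rewrite [RHS]exchange_big /=; apply: eq_bigr => x /eqP gx.
rewrite [LHS](sum_fiber g) gx; apply: eq_bigr => q _; rewrite mulr_sumr.
by apply: eq_bigr => y /eqP ->.
Qed.


Section Conv.
Variables (d n : nat) (G : 'M['F_d]_2).
Hypothesis dG : \det G != 0.
Variable C : numClosedFieldType.
Local Notation T := (qidx d n).

Lemma affine_inj (a c : 'F_d) (x : T) : a != 0 ->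
  injective (fun b : T => [ffun k => c * x k + a * b k] : T).
Proof.
move=> a0 b1 b2 /ffunP h; apply/ffunP => k; have := h k.
by rewrite !ffunE => /addrI /(mulfI a0).
Qed.

Lemma affine_inj2 (a c : 'F_d) (b : T) : c != 0 ->
  injective (fun x : T => [ffun k => c * x k + a * b k] : T).
Proof.
move=> c0 x1 x2 /ffunP h; apply/ffunP => k; have := h k.
by rewrite !ffunE => /addIr /(mulfI c0).
Qed.

Lemma conv_tr (rho sigma : op C T) :
  \sum_x conv G rho sigma x x = (\sum_p rho p p) * (\sum_q sigma q q).
Proof.
under eq_bigr => x _ do rewrite (conv_E dG).
rewrite mulr_suml.
under [RHS]eq_bigr => p _ do rewrite mulr_sumr.
rewrite !pair_bigA /= [RHS](reindex_inj (can_inj (keymapK dG))) /=.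
by apply: eq_bigr => -[x b] _.
Qed.

Lemma conv_herm (rho sigma : op C T) :
  (forall i j, rho j i = (rho i j)^*) -> (forall i j, sigma j i = (sigma i j)^*) ->
  forall x y, conv G rho sigma y x = (conv G rho sigma x y)^*.
Proof.
move=> rh sh x y; rewrite !(conv_E dG) rmorph_sum; apply: eq_bigr => b _.
by rewrite rmorphM (rh (kinv G (x, b)).1) (sh (kinv G (x, b)).2).
Qed.

Lemma lin_s (rho : op C T) (X : op C T) (c : 'I_#|T| -> C) (Y : 'I_#|T| -> op C T) :
  (forall p q, X p q = \sum_j c j * Y j p q) ->
  forall x y, conv G rho X x y = \sum_j c j * conv G rho (Y j) x y.
Proof.
move=> hX x y; rewrite (conv_E dG).
under eq_bigr => b _ do rewrite hX mulr_sumr.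
rewrite exchange_big /=; apply: eq_bigr => j _.
rewrite (conv_E dG) mulr_sumr; apply: eq_bigr => b _; ring.
Qed.

Lemma lin_r (sigma : op C T) (X : op C T) (c : 'I_#|T| -> C) (Y : 'I_#|T| -> op C T) :
  (forall p q, X p q = \sum_j c j * Y j p q) ->
  forall x y, conv G X sigma x y = \sum_j c j * conv G (Y j) sigma x y.
Proof.
move=> hX x y; rewrite (conv_E dG).
under eq_bigr => b _ do rewrite hX mulr_suml.
rewrite exchange_big /=; apply: eq_bigr => j _.
rewrite (conv_E dG) mulr_sumr; apply: eq_bigr => b _; ring.
Qed.

Lemma pos_s (rho : op C T) : (forall v, 0 <= quad v rho) ->
  forall u v, 0 <= quad u (conv G rho (rk1 v)).
Proof.
move=> rp u v.
have -> : quad u (conv G rho (rk1 v)) =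
  \sum_b \sum_x \sum_y (u x * (v (kinv G (x, b)).2)^*)^* *
     rho ((fun x => (kinv G (x, b)).1) x) ((fun x => (kinv G (x, b)).1) y) *
     (u y * (v (kinv G (y, b)).2)^*).
  rewrite /quad.
  under eq_bigr => x _ do under eq_bigr => y _ do rewrite (conv_E dG) mulr_sumr mulr_suml.
  under eq_bigr => x _ do rewrite exchange_big.
  rewrite exchange_big /=; apply: eq_bigr => b _; apply: eq_bigr => x _.
  apply: eq_bigr => y _.
  rewrite /rk1 rmorphM /= conjCK; ring.
by apply: sumr_ge0 => b _; apply: psd_pull.
Qed.

Lemma pos_r (sigma : op C T) : (forall v, 0 <= quad v sigma) ->
  forall u v, 0 <= quad u (conv G (rk1 v) sigma).
Proof.
move=> sp u v.
have -> : quad u (conv G (rk1 v) sigma) =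
  \sum_b \sum_x \sum_y (u x * (v (kinv G (x, b)).1)^*)^* *
     sigma ((fun x => (kinv G (x, b)).2) x) ((fun x => (kinv G (x, b)).2) y) *
     (u y * (v (kinv G (y, b)).1)^*).
  rewrite /quad.
  under eq_bigr => x _ do under eq_bigr => y _ do rewrite (conv_E dG) mulr_sumr mulr_suml.
  under eq_bigr => x _ do rewrite exchange_big.
  rewrite exchange_big /=; apply: eq_bigr => b _; apply: eq_bigr => x _.
  apply: eq_bigr => y _.
  rewrite /rk1 rmorphM /= conjCK; ring.
by apply: sumr_ge0 => b _; apply: psd_pull.
Qed.

Lemma uni_s (rho : op C T) : g01 G != 0 -> g10 G != 0 -> \sum_p rho p p = 1 ->
  forall X : op C T, (forall p q, X p q = (p == q)%:R) ->
  forall x y, conv G rho X x y = (x == y)%:R.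
Proof.
move=> h01 h10 tr X hX x y; rewrite (conv_E dG).
under eq_bigr => b _ do rewrite hX.
case: (eqVneq x y) => [<-|xy].
  have -> : (true%:R : C) = 1 by [].
  rewrite -[in RHS]tr [RHS](reindex_inj (affine_inj (a := g10 G) (c := g00 G) (x := x) h10)) /=.
  by apply: eq_bigr => b _; rewrite eqxx /= mulr1.
apply: big1 => b _; case: eqP => [e|_]; last by rewrite mulr0.
by move: e => /= /(affine_inj2 (a := g11 G) (c := g01 G) (b := b) h01) e; rewrite e eqxx in xy.
Qed.

Lemma uni_r (sigma : op C T) : g00 G != 0 -> g11 G != 0 -> \sum_p sigma p p = 1 ->
  forall X : op C T, (forall p q, X p q = (p == q)%:R) ->
  forall x y, conv G X sigma x y = (x == y)%:R.
Proof.
move=> h00 h11 tr X hX x y; rewrite (conv_E dG).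
under eq_bigr => b _ do rewrite hX.
case: (eqVneq x y) => [<-|xy].
  have -> : (true%:R : C) = 1 by [].
  rewrite -[in RHS]tr [RHS](reindex_inj (affine_inj (a := g11 G) (c := g01 G) (x := x) h11)) /=.
  by apply: eq_bigr => b _; rewrite eqxx /= mul1r.
apply: big1 => b _; case: eqP => [e|_]; last by rewrite mul0r.
by move: e => /= /(affine_inj2 (a := g10 G) (c := g00 G) (b := b) h00) e; rewrite e eqxx in xy.
Qed.

Lemma tp_s (rho : op C T) : \sum_p rho p p = 1 ->
  forall v, \sum_x conv G rho (rk1 v) x x = \sum_x v x * (v x)^*.
Proof. by move=> tr v; rewrite conv_tr tr mul1r. Qed.

Lemma tp_r (sigma : op C T) : \sum_p sigma p p = 1 ->
  forall v, \sum_x conv G (rk1 v) sigma x x = \sum_x v x * (v x)^*.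
Proof. by move=> tr v; rewrite conv_tr tr mulr1. Qed.

End Conv.

Unset Implicit Arguments.

Theorem mainTheorem10 (C : numClosedFieldType) (d n : nat) (G : 'M['F_d]_2)
  (rho sigma : op C (qidx d n)) :
  prime d -> (1 <= n)%N -> \det G != 0 ->
  is_state rho -> is_state sigma ->
  (* (1) *)
  (odd_parity_positive G ->
     forall (l ls : 'I_#|qidx d n| -> C),
       eigvec (conv G rho sigma) l -> eigvec sigma ls ->
       majorized l ls /\
       (forall f, schur_concave f -> f ls <= f l)) /\
  (* (2) *)
  (even_parity_positive G ->
     forall (l lr : 'I_#|qidx d n| -> C),
       eigvec (conv G rho sigma) l -> eigvec rho lr ->
       majorized l lr /\
       (forall f, schur_concave f -> f lr <= f l)) /\
  (* (3) *)
  (positiveG G ->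
     forall (l lr ls : 'I_#|qidx d n| -> C),
       eigvec (conv G rho sigma) l -> eigvec rho lr -> eigvec sigma ls ->
       [/\ majorized l lr, majorized l ls &
           (forall f, schur_concave f -> f lr <= f l /\ f ls <= f l)]).
Proof.
move=> dp n1 dG rs ss.
have [rh rpsd rtr] := rs; have [sh spsd str] := ss.
have odd_res : odd_parity_positive G -> forall l ls : 'I_#|qidx d n| -> C,
    eigvec (conv G rho sigma) l -> eigvec sigma ls ->
    majorized l ls /\ prob_vec l /\ prob_vec ls.
  case/and3P => _ h01 h10 l ls el els.
  apply: (channel (Phi := fun X => conv G rho X) (A := sigma)) => //.
  - by move=> X c Y hX x y; apply: (lin_s dG).
  - by move=> u v; apply: (pos_s dG).
  - by move=> X hX x y; apply: (uni_s dG).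
  - by move=> v; apply: (tp_s dG).
  - by move=> x y; apply: (conv_herm dG).
have even_res : even_parity_positive G -> forall l lr : 'I_#|qidx d n| -> C,
    eigvec (conv G rho sigma) l -> eigvec rho lr ->
    majorized l lr /\ prob_vec l /\ prob_vec lr.
  case/and3P => _ h00 h11 l lr el elr.
  apply: (channel (Phi := fun X => conv G X sigma) (A := rho)) => //.
  - by move=> X c Y hX x y; apply: (lin_r dG).
  - by move=> u v; apply: (pos_r dG).
  - by move=> X hX x y; apply: (uni_r dG).
  - by move=> v; apply: (tp_r dG).
  - by move=> x y; apply: (conv_herm dG).
split; [|split].
- move=> hp l ls el els; have [m [pl pls]] := odd_res hp l ls el els.
  by split => // f fs; apply: fs.
- move=> hp l lr el elr; have [m [pl plr]] := even_res hp l lr el elr.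
  by split => // f fs; apply: fs.
- move=> /andP[ho he] l lr ls el elr els.
  have [m1 [pl plr]] := even_res he l lr el elr.
  have [m2 [_ pls]] := odd_res ho l ls el els.
  by split => // f fs; split; apply: fs.
Qed.
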